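(* Consider a fork-join queueing network with nodes $\mathbf N=\{1,\dots,n\}$, topology given by a directed graph $\mathcal G=(\mathbf N,\mathbf A)$, initial buffer contents $r_i\in\{0,1,2,\dots\}\cup\{\infty\}$ with $r_i=\infty$ exactly for the nodes $i$ with $\mathbf P(i)=\emptyset$, and service times $\tau_{ik}>0$ ($i=1,\dots,n$, $k=1,2,\dots$). Let the departure epochs $d_i(k)\in\underline{\mathbb R}$, $k\ge1$, satisfy, for all $i$ and all $k\ge1$, $$d_i(k)=\tau_{ik}\otimes a_i(k)\oplus\tau_{ik}\otimes d_i(k-1),\qquad a_i(k)=\begin{cases}\bigoplus_{j\in\mathbf P(i)} d_j(k-r_i), & \mathbf P(i)\neq\emptyset,\\ \varepsilon, & \mathbf P(i)=\emptyset,\end{cases}$$ with the conventions $d_i(0)=0$ and $d_i(k)=\varepsilon$ for $k<0$. Let $M=\max\{r_i: r_i<\infty\}$ (with $M=0$ if no $r_i$ is finite) and $M'=\max(M,1)$. For each integer $m\ge0$ let $G_m=(g^m_{ij})$ be the $n\times n$ matrix with $g^m_{ij}=0$ if $i\in\mathbf P(j)$ and $r_j=m$, and $g^m_{ij}=\varepsilon$ otherwise, and let $\mathcal G_0$ be the graph associated with $G_0$. Let $\mathcal T_k=\mathrm{diag}(\tau_{1k},\dots,\tau_{nk})$ (off-diagonal entries $\varepsilon$). If $\mathcal G_0$ is acyclic and $p$ is the length of its longest path, then for every $k\ge1$ the vector $\mathbf d(k)=(d_1(k),\dots,d_n(k))^T$ satisfies the explicit equation $$\mathbf d(k)=\bigoplus_{m=1}^{M'}T_m(k)\otimes\mathbf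 d(k-m),$$ where $$T_1(k)=(E\oplus\mathcal T_k\otimes G_0^T)^p\otimes\mathcal T_k\otimes(E\oplus G_1^T),\qquad T_m(k)=(E\oplus\mathcal T_k\otimes G_0^T)^p\otimes\mathcal T_k\otimes G_m^T\ \ (m=2,\dots,M').$$
   Context: Max-plus algebra: on $\underline{\mathbb R}=\mathbb R\cup\{\varepsilon\}$ with $\varepsilon=-\infty$, define $x\oplus y=\max(x,y)$ and $x\otimes y=x+y$ (with $x\otimes\varepsilon=\varepsilon\otimes x=\varepsilon$). For matrices, $(X\oplus Y)_{ij}=x_{ij}\oplus y_{ij}$, $(X\otimes Y)_{ij}=\bigoplus_k x_{ik}\otimes y_{kj}$; matrix–vector products likewise; $\bigoplus$ over an index set denotes iterated $\oplus$ (maximum), and an empty $\oplus$-sum equals $\varepsilon$. $E$ is the $n\times n$ identity (diagonal $0$, off-diagonal $\varepsilon$); $X^0=E$, $X^q=X\otimes X^{q-1}$; $X^T$ is the transpose. The graph associated with an $n\times n$ matrix $X$ has vertices $\{1,\dots,n\}$ and an arc $(i,j)$ iff $x_{ij}\ne\varepsilon$ (loops count as cycles); path length = number of arcs. For the network graph $\mathcal G=(\mathbf N,\mathbf A)$, $\mathbf P(i)=\{j:(j,i)\in\mathbf A\}$ is the set of predecessors of node $i$. Interpretation: $d_i(k)$ is the $k$th departure epoch from node $i$, $a_i(k)$ the $k$th arrival epoch into its queue, $r_i$ the initial number of customers waiting in its buffer; a node with no predecessors represents an infinite external arrival stream. *)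

(* Defs.v *)
(* Max-plus algebra over an arbitrary real domain R
   (instantiated to the reals in the paper); epsilon = -infinity is None. *)
From HB Require Import structures.
From mathcomp Require Import all_boot all_order all_algebra.
Set Implicit Arguments. Unset Strict Implicit. Unset Printing Implicit Defensive.
Import Order.TTheory GRing.Theory Num.Theory.

Section MaxPlus.
Variable R : realDomainType.
Local Open Scope ring_scope.

Definition mp := option R.

Definition oplus (x y : mp) : mp :=
  match x, y with
  | None, _ => y
  | _, None => x
  | Some a, Some b => Some (Num.max a b)
  end.

Definition otimes (x y : mp) : mp :=
  match x, y with
  | Some a, Some b => Some (a + b)
  | _, _ => None
  end.

Definition mpmx (n : nat) := 'I_n -> 'I_n -> mp.
Definition mpvec (n : nat) := 'I_n -> mp.

Definition mx_add n (X Y : mpmx n) : mpmx n := fun i j => oplus (X i j) (Y i j).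
Definition mx_mul n (X Y : mpmx n) : mpmx n :=
  fun i j => \big[oplus/None]_(k < n) otimes (X i k) (Y k j).
Definition mx_vmul n (X : mpmx n) (v : mpvec n) : mpvec n :=
  fun i => \big[oplus/None]_(k < n) otimes (X i k) (v k).
Definition mx_id n : mpmx n := fun i j => if i == j then Some 0 else None.
Definition mx_pow n (X : mpmx n) (q : nat) : mpmx n := iter q (mx_mul X) (@mx_id n).
Definition mx_tr n (X : mpmx n) : mpmx n := fun i j => X j i.
Definition vec_add n (u v : mpvec n) : mpvec n := fun i => oplus (u i) (v i).

Definition mx_graph n (X : mpmx n) : rel 'I_n := fun i j => X i j != None.

End MaxPlus.

(* Graph notions on a relation e over a finType (arc (i,j) iff e i j).
   A path from x is x :: s with consecutive arcs and no repeated vertex;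
   its length is the number of arcs, size s. *)
Definition is_gpath (T : finType) (e : rel T) (x : T) (s : seq T) : bool :=
  path e x s && uniq (x :: s).

(* acyclic: no closed walk of positive length (loops count as cycles) *)
Definition acyclic (T : finType) (e : rel T) : Prop :=
  forall (x : T) (s : seq T), path e x s -> last x s = x -> s = [::].

Definition longest_path_length (T : finType) (e : rel T) (p : nat) : Prop :=
  (exists x s, is_gpath e x s /\ size s = p) /\
  (forall x s, is_gpath e x s -> size s <= p).

Section Network.
Variable R : realDomainType.
Variable n : nat.
Local Open Scope ring_scope.

(* A j i : arc (j,i) in the network graph, i.e. j \in P(i).
   r i : None = infinity, Some m = m.
   d : departure epochs d i k, k : nat; negative indices give eps. *)

(* d_j(k - m) with the convention d_j(l) = eps for l < 0 and k - infinity = -infinity *)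
Definition dshift (d : 'I_n -> nat -> mp R) (j : 'I_n) (k : nat) (m : option nat) : mp R :=
  match m with
  | Some m => if (m <= k)%N then d j (k - m)%N else None
  | None => None
  end.

Definition arrival (A : rel 'I_n) (r : 'I_n -> option nat)
    (d : 'I_n -> nat -> mp R) (i : 'I_n) (k : nat) : mp R :=
  if [exists j, A j i] then \big[@oplus R/None]_(j | A j i) dshift d j k (r i)
  else None.

Definition Mfin (r : 'I_n -> option nat) : nat := \max_(i < n) odflt 0%N (r i).

Definition Gm (A : rel 'I_n) (r : 'I_n -> option nat) (m : nat) : mpmx R n :=
  fun i j => if A i j && (r j == Some m) then Some 0 else None.

Definition Tdiag (tau : 'I_n -> nat -> R) (k : nat) : mpmx R n :=
  fun i j => if i == j then Some (tau i k) else None.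

Definition Tm (A : rel 'I_n) (r : 'I_n -> option nat) (tau : 'I_n -> nat -> R)
    (p : nat) (m k : nat) : mpmx R n :=
  let Tk := Tdiag tau k in
  let S := mx_pow (mx_add (@mx_id R n) (mx_mul Tk (mx_tr (Gm A r 0)))) p in
  if m == 1%N then mx_mul S (mx_mul Tk (mx_add (@mx_id R n) (mx_tr (Gm A r 1))))
  else mx_mul S (mx_mul Tk (mx_tr (Gm A r m))).

End Network.
Arguments Gm {R n} A r m.

(* Main.v *)
Require Import Defs.
From HB Require Import structures.
From mathcomp Require Import all_boot all_order all_algebra.
Import Order.TTheory GRing.Theory Num.Theory.
Local Open Scope ring_scope.
Set Implicit Arguments. Unset Strict Implicit.

Section MPAlg.
Variable R : realDomainType.
Local Notation op := (@oplus R).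
Local Notation ot := (@otimes R).

Lemma oplusA : associative op.
Proof. by case=> [a|] [b|] [c|] //=; rewrite maxA. Qed.
Lemma oplusC : commutative op.
Proof. by case=> [a|] [b|] //=; rewrite maxC. Qed.
Lemma oplus0 : left_id None op.
Proof. by case. Qed.
Lemma oplusx0 : right_id None op.
Proof. by case. Qed.
Lemma oplusxx (x : mp R) : op x x = x.
Proof. by case: x => [a|] //=; rewrite maxxx. Qed.
Lemma otimesA : associative ot.
Proof. by case=> [a|] [b|] [c|] //=; rewrite addrA. Qed.
Lemma otimesC : commutative ot.
Proof. by case=> [a|] [b|] //=; rewrite addrC. Qed.
Lemma otimes0l : left_zero None ot. Proof. by case. Qed.
Lemma otimes0r : right_zero None ot. Proof. by case. Qed.
Lemma otimes1 (x : mp R) : ot (Some 0) x = x.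
Proof. by case: x => [a|] //=; rewrite add0r. Qed.
Lemma otimesDr : right_distributive ot op.
Proof. by case=> [a|] [b|] [c|] //=; rewrite addr_maxr. Qed.
Lemma otimesDl : left_distributive ot op.
Proof. by move=> x y z; rewrite otimesC otimesDr !(otimesC z). Qed.

HB.instance Definition _ := Monoid.isComLaw.Build (mp R) None op oplusA oplusC oplus0.
HB.instance Definition _ := Monoid.isMulLaw.Build (mp R) None ot otimes0l otimes0r.
HB.instance Definition _ := Monoid.isAddLaw.Build (mp R) ot op otimesDl otimesDr.


Variable n : nat.
Implicit Types (X Y : mpmx R n) (u v w : mpvec R n).

Lemma vmul_ext X u v i : (forall j, u j = v j) -> mx_vmul X u i = mx_vmul X v i.
Proof. by move=> e; apply: eq_bigr => j _; rewrite e. Qed.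

Lemma vmul_mul X Y v i : mx_vmul (mx_mul X Y) v i = mx_vmul X (mx_vmul Y v) i.
Proof.
rewrite /mx_vmul /mx_mul.
under eq_bigr do rewrite big_distrl.
rewrite exchange_big /=; apply: eq_bigr => l _.
rewrite big_distrr; apply: eq_bigr => k _.
by rewrite -otimesA.
Qed.

Lemma vmul_add X Y v i : mx_vmul (mx_add X Y) v i = op (mx_vmul X v i) (mx_vmul Y v i).
Proof. by rewrite /mx_vmul -big_split; apply: eq_bigr => j _; rewrite otimesDl. Qed.

Lemma vmul_vadd X u v i : mx_vmul X (vec_add u v) i = op (mx_vmul X u i) (mx_vmul X v i).
Proof. by rewrite /mx_vmul -big_split; apply: eq_bigr => j _; rewrite otimesDr. Qed.

Lemma vmul_id v i : mx_vmul (@mx_id R n) v i = v i.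
Proof.
rewrite /mx_vmul (bigD1 i) //= /mx_id eqxx otimes1 big1 => [|j ji].
  by case: (v i).
by rewrite eq_sym (negbTE ji).
Qed.

Lemma vmul_big (I : Type) (s : seq I) (P : pred I) X (F : I -> mpvec R n) i :
  mx_vmul X (fun j => \big[op/None]_(m <- s | P m) F m j) i =
  \big[op/None]_(m <- s | P m) mx_vmul X (F m) i.
Proof.
rewrite /mx_vmul; under eq_bigr do rewrite big_distrr.
by rewrite exchange_big.
Qed.

Lemma vmul_None X v i : (forall j, v j = None) -> mx_vmul X v i = None.
Proof. by move=> e; rewrite /mx_vmul; apply: big1 => j _; rewrite e; case: (X i j). Qed.

Lemma Tdiag_vec (tau : 'I_n -> nat -> R) k w i :
  mx_vmul (Tdiag tau k) w i = ot (Some (tau i k)) (w i).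
Proof.
rewrite /mx_vmul (bigD1 i) //= /Tdiag eqxx big1 => [|j ji].
  by case: (w i).
by rewrite eq_sym (negbTE ji).
Qed.

Lemma vmul_Tdiag (tau : 'I_n -> nat -> R) k X v i :
  mx_vmul (mx_mul (Tdiag tau k) X) v i = ot (Some (tau i k)) (mx_vmul X v i).
Proof. by rewrite vmul_mul Tdiag_vec. Qed.

Definition vle u v := forall i, op (u i) (v i) = v i.

Lemma vle_trans u v w : vle u v -> vle v w -> vle u w.
Proof. by move=> h1 h2 i; rewrite -h2 oplusA h1. Qed.

Lemma vle_anti u v i : vle u v -> vle v u -> u i = v i.
Proof. by move=> h1 h2; rewrite -h1 oplusC h2. Qed.

Lemma vle_mono X u v : vle u v -> vle (mx_vmul X u) (mx_vmul X v).
Proof. by move=> h i; rewrite -vmul_vadd; apply: vmul_ext => j; rewrite /vec_add h. Qed.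

Lemma vle_join u v w : vle u w -> vle v w -> vle (vec_add u v) w.
Proof. by move=> h1 h2 i; rewrite /vec_add -oplusA h2 h1. Qed.

Lemma vle_l u v : vle u (vec_add u v).
Proof. by move=> i; rewrite /vec_add oplusA oplusxx. Qed.

Lemma vle_r u v : vle v (vec_add u v).
Proof. by move=> i; rewrite /vec_add oplusC -oplusA oplusxx. Qed.

End MPAlg.

Section Fix.
Variable R : realDomainType.
Local Notation op := (@oplus R).
Local Notation ot := (@otimes R).
Variable n : nat.
Implicit Types (X Y A B : mpmx R n) (u v w x b : mpvec R n).

Lemma pow_S X q v i : mx_vmul (mx_pow X q.+1) v i = mx_vmul X (mx_vmul (mx_pow X q) v) i.
Proof. exact: vmul_mul. Qed.
Lemma pow_0 X v i : mx_vmul (mx_pow X 0) v i = v i.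
Proof. exact: vmul_id. Qed.

Lemma vmul_None_row X v i : (forall j, X i j = None) -> mx_vmul X v i = None.
Proof. by move=> e; rewrite /mx_vmul; apply: big1 => j _; rewrite e. Qed.

Lemma fixpoint A b x p :
  (forall i, x i = op (mx_vmul A x i) (b i)) ->
  (forall i j, mx_pow A p.+1 i j = None) ->
  forall i, x i = mx_vmul (mx_pow (mx_add (@mx_id R n) A) p) b i.
Proof.
move=> hx hnil.
set B := mx_add (@mx_id R n) A.
have F1 : vle (mx_vmul A x) x.
  by move=> i; rewrite {1}hx oplusA oplusxx -hx.
have F1b : vle b x.
  by move=> i; rewrite {1}hx oplusA (oplusC (b i)) -oplusA oplusxx -hx.
have F2 : forall q, vle (mx_vmul (mx_pow A q) x) x.
  elim=> [|q IH] i; first by rewrite pow_0 oplusxx.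
  apply: (vle_trans _ F1) => j; rewrite pow_S; exact: (vle_mono A IH j).
have F3 : forall q, vle (mx_vmul (mx_pow B q) b) x.
  elim=> [|q IH] i; first by rewrite pow_0; exact: F1b.
  rewrite pow_S vmul_add vmul_id.
  exact: (vle_join IH (vle_trans (vle_mono A IH) F1) i).
have F4 : forall q i, x i = op (mx_vmul (mx_pow A q.+1) x i) (mx_vmul (mx_pow B q) b i).
  elim=> [|q IH] i.
    rewrite pow_S pow_0 (vmul_ext A (v := x)) //; exact: pow_0.
  rewrite pow_S (pow_S B) vmul_add vmul_id.
  rewrite (oplusC (mx_vmul (mx_pow B q) b i)) oplusA -vmul_vadd.
  rewrite (vmul_ext A (v := x)); last by move=> j; rewrite /vec_add -IH.
  apply: (vle_anti (u := x) (v := vec_add (mx_vmul A x) (mx_vmul (mx_pow B q) b))).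
    have h : vle (mx_vmul (mx_pow A q.+1) x) (mx_vmul A x).
      by move=> j; rewrite pow_S; exact: (vle_mono A (F2 q) j).
    move=> j; rewrite {1}IH.
    exact: (vle_join (vle_trans h (vle_l _ _)) (vle_r _ _) j).
  exact: (vle_join F1 (F3 q)).
move=> i; rewrite (F4 p i) vmul_None_row //.
Qed.

End Fix.

Lemma acyclic_uniq (T : finType) (e : rel T) :
  acyclic e -> forall x s, path e x s -> uniq (x :: s).
Proof.
move=> hac x s; elim: s x => [|y s IH] x //; case/andP => exy ps.
rewrite cons_uniq (IH y ps) andbT; apply/negP => xin.
have pt : path e x (y :: s) by rewrite /= exy.
move: pt; case/splitPr: xin => s1 s2.
rewrite cat_path /= => /and3P [p1 ex _].
have := hac x (rcons s1 x); rewrite rcons_path p1 ex last_rcons.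
move=> H; have := H erefl erefl; by case: s1 {p1 ex H}.
Qed.

Section Walk.
Variable R : realDomainType.
Variable n : nat.
Local Notation op := (@oplus R).
Local Notation ot := (@otimes R).

Lemma big_nonNone (F : 'I_n -> mp R) :
  \big[op/None]_(l < n) F l != None -> exists l, F l != None.
Proof.
move=> H; case: (pickP (fun l => F l != None)) => [l h|h]; first by exists l.
move: H; rewrite big1 ?eqxx // => l _; apply/eqP; exact: negbFE (h l).
Qed.

Lemma ot_l (a b : mp R) : otimes a b != None -> a != None.
Proof. by case: a. Qed.
Lemma ot_r (a b : mp R) : otimes a b != None -> b != None.
Proof. by case: a; case: b. Qed.

Lemma walk_of_pow (X : mpmx R n) (g : rel 'I_n) :
  (forall i l, X i l != None -> g l i) ->
  forall q i j, mx_pow X q i j != None ->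
  exists s, [/\ path g j s, last j s = i & size s = q].
Proof.
move=> hX; elim=> [|q IH] i j.
  rewrite /mx_pow /= /mx_id.
  case: (boolP (i == j)) => [/eqP -> _|_]; [by exists [::] | by []].
move=> /big_nonNone [l] h.
have h1 := ot_l h.
have h2 := ot_r h.
have [s [ps ls ss]] := IH l j h2.
exists (rcons s i); rewrite rcons_path ps ls last_rcons size_rcons ss.
by split=> //; apply: hX.
Qed.
End Walk.

Unset Implicit Arguments. Set Strict Implicit.

Lemma op4 (R : realDomainType) (a c e f : mp R) :
  oplus (oplus a (oplus c e)) f = oplus a (oplus (oplus f c) e).
Proof.
rewrite -oplusA; congr (oplus a _).
by rewrite (oplusC f c) -!oplusA (oplusC e f).
Qed.

Lemma arrival_eq (R : realDomainType) (n : nat) (A : rel 'I_n)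
    (r : 'I_n -> option nat) (d : 'I_n -> nat -> mp R) k i :
  (forall i, (r i == None) = ~~ [exists j, A j i]) ->
  arrival A r d i k =
  \big[@oplus R/None]_(0 <= m < (maxn (Mfin r) 1).+1)
     mx_vmul (mx_tr (Gm A r m)) (fun j => dshift d j k (Some m)) i.
Proof.
move=> hr; rewrite /arrival.
case ri: (r i) (hr i) => [m0|].
  move=> /esym /negbFE ->.
  have m0le : (m0 < (maxn (Mfin r) 1).+1)%N.
    rewrite ltnS; apply: (leq_trans _ (leq_maxl _ _)).
    by have := @leq_bigmax _ (fun i => odflt 0%N (r i)) i; rewrite ri.
  rewrite (bigD1_seq m0) ?mem_index_iota ?iota_uniq //=.
  rewrite [X in _ = oplus _ X]big1 => [|m mm0]; last first.
    apply: vmul_None_row => j; rewrite /mx_tr /Gm ri.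
    by rewrite (_ : (Some m0 == Some m) = false) ?andbF // eq_sym; apply/negbTE.
  rewrite oplusx0 /mx_vmul big_mkcond; apply: eq_bigr => j _.
  rewrite /mx_tr /Gm ri eqxx andbT.
  by case: (A j i) => //; rewrite otimes1.
move=> _.
have -> : \big[@oplus R/None]_(j | A j i) dshift d j k None = None.
  by apply: big1.
rewrite if_same; apply/esym/big1 => m _; rewrite /mx_vmul; apply: big1 => j _.
by rewrite /mx_tr /Gm ri andbF.
Qed.

Theorem theorem2 (R : realDomainType) (n : nat) (A : rel 'I_n)
    (r : 'I_n -> option nat) (tau : 'I_n -> nat -> R)
    (d : 'I_n -> nat -> mp R) (p : nat) :
  (forall i, (r i == None) = ~~ [exists j, A j i]) ->
  (forall i k, (0 < k)%N -> 0 < tau i k) ->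
  (forall i, d i 0%N = Some 0) ->
  (forall i k, (0 < k)%N ->
     d i k = oplus (otimes (Some (tau i k)) (arrival A r d i k))
                   (otimes (Some (tau i k)) (d i k.-1))) ->
  acyclic (mx_graph (@Gm R n A r 0)) ->
  longest_path_length (mx_graph (@Gm R n A r 0)) p ->
  forall k, (0 < k)%N ->
    forall i, d i k =
      \big[@oplus R/None]_(1 <= m < (maxn (Mfin r) 1).+1)
         mx_vmul (Tm A r tau p m k) (fun j => dshift d j k (Some m)) i.
Proof.
move=> hr _ _ hd hac hlp k hk i.
pose H := fun m => if m == 1%N then mx_add (@mx_id R n) (mx_tr (Gm A r 1))
                   else mx_tr (Gm A r m).
pose Am := mx_mul (Tdiag tau k) (mx_tr (Gm A r 0)).
pose S := mx_pow (mx_add (@mx_id R n) Am) p.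
pose b := fun j => \big[@oplus R/None]_(1 <= m < (maxn (Mfin r) 1).+1)
   mx_vmul (mx_mul (Tdiag tau k) (H m)) (fun j => dshift d j k (Some m)) j.
have eT : forall m, mx_vmul (Tm A r tau p m k) (fun j => dshift d j k (Some m)) i =
   mx_vmul S (mx_vmul (mx_mul (Tdiag tau k) (H m)) (fun j => dshift d j k (Some m))) i.
  by move=> m; rewrite /Tm /H /S /Am; case: (m == 1%N); exact: vmul_mul.
rewrite (eq_bigr _ (fun m _ => eT m)) -vmul_big.
apply: (fixpoint (A := Am) (b := b) (x := fun j => d j k) (p := p)).
  move=> i0; rewrite hd // /Am vmul_Tdiag.
  have eb : b i0 = otimes (Some (tau i0 k))
     (\big[@oplus R/None]_(1 <= m < (maxn (Mfin r) 1).+1)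
        mx_vmul (H m) (fun j => dshift d j k (Some m)) i0).
    rewrite /b big_distrr; apply: eq_bigr => m _; exact: vmul_Tdiag.
  rewrite eb -!otimesDr; congr (otimes _ _).
  rewrite (@arrival_eq R n A r d k i0 hr).
  have M1 : (0 < maxn (Mfin r) 1)%N by apply: leq_trans (leq_maxr _ _).
  rewrite [in LHS]big_ltn // [in LHS]big_ltn ?ltnS // [in RHS]big_ltn ?ltnS //.
  have e0 : mx_vmul (mx_tr (Gm A r 0)) (fun j => dshift d j k (Some 0%N)) i0 =
            mx_vmul (mx_tr (Gm A r 0)) (d^~ k) i0.
    by apply: vmul_ext => j; rewrite /dshift subn0.
  have e1 : mx_vmul (H 1%N) (fun j => dshift d j k (Some 1%N)) i0 =
     oplus (d i0 k.-1) (mx_vmul (mx_tr (Gm A r 1)) (fun j => dshift d j k (Some 1%N)) i0).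
    by rewrite /H eqxx vmul_add vmul_id /dshift hk subn1.
  have e2 : \big[@oplus R/None]_(2 <= m < (maxn (Mfin r) 1).+1)
       mx_vmul (mx_tr (Gm A r m)) (fun j => dshift d j k (Some m)) i0 =
     \big[@oplus R/None]_(2 <= m < (maxn (Mfin r) 1).+1)
       mx_vmul (H m) (fun j => dshift d j k (Some m)) i0.
    apply: eq_big_nat => m /andP [hm _].
    have /negbTE hm1 : m != 1%N by case: m hm => [|[|]].
    by rewrite /H hm1.
  by rewrite op4 e0 e1 e2.
move=> i0 j0; apply/eqP; apply: contraT => hne.
have hX : forall i1 l : 'I_n, Am i1 l != None -> @mx_graph R n (Gm A r 0) l i1.
  move=> i1 l; rewrite /Am.
  change (mx_vmul (Tdiag tau k) (fun m => mx_tr (Gm A r 0) m l) i1 != None ->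
          @mx_graph R n (Gm A r 0) l i1).
  by rewrite Tdiag_vec => /ot_r.
have [s [ps ls ss]] := walk_of_pow hX hne.
have u := acyclic_uniq hac ps.
by move: (hlp.2 j0 s); rewrite /is_gpath ps u ss ltnn; apply.
Qed.
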